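(* Let $\Omega\subset\mathbb{R}^2$ be open and bounded and let $(y^l)_l\subset L^1(\Omega)$ satisfy $\big|\Omega\setminus\bigcup_{n\in\mathbb{N}}\bigcap_{l\ge n}\{|y^n-y^l|\le1\}\big|=0$. Then there is a (not relabeled) subsequence and an increasing continuous function $\psi:[0,\infty)\to[0,\infty)$ with $\lim_{t\to\infty}\psi(t)=\infty$ such that $\int_\Omega\psi(|y^l|)\le C$ for a constant $C>0$ independent of $l$.
   Context: $|\cdot|$ denotes Lebesgue measure. *)

(* Defs.v *)
From HB Require Import structures.
From mathcomp Require Import all_boot all_order all_algebra.
From mathcomp Require Import all_classical all_reals all_analysis.
Set Implicit Arguments. Unset Strict Implicit. Unset Printing Implicit Defensive.
Import Order.TTheory GRing.Theory Num.Theory.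
Import numFieldNormedType.Exports.
Local Open Scope classical_set_scope.
Local Open Scope ring_scope.

Definition leb2 (R : realType) :=
  ((@lebesgue_measure R) \x (@lebesgue_measure R))%E.
Arguments leb2 R : clear implicits.

(* Main.v *)
Require Import Defs.
From HB Require Import structures.
From mathcomp Require Import all_boot all_order all_algebra.
From mathcomp Require Import all_classical all_reals all_analysis.
From mathcomp Require Import measurable_realfun.
From mathcomp Require Import ring lra.
Import Order.TTheory GRing.Theory Num.Theory.
Import numFieldNormedType.Exports.
Local Open Scope classical_set_scope.
Local Open Scope ring_scope.

Section Psi.
Variable R : realType.
Variable a : nat -> nat.
Hypothesis ha : forall m n, (m < n)%N -> (a m < a n)%N.

Definition clamp (u : R) : R := Num.min (Num.max u 0) 1.
Definition SS N (t : R) := \sum_(k < N) clamp (t - (a k)%:R).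
Definition psi (t : R) := (1 - expR (- t)) + SS (Num.truncn t).+1 t.

Lemma clamp_ge0 u : 0 <= clamp u.
Proof. by rewrite /clamp le_min le_max lexx orbT ler01. Qed.
Lemma clamp_le1 u : clamp u <= 1.
Proof. by rewrite /clamp ge_min lexx orbT. Qed.
Lemma clamp0 u : u <= 0 -> clamp u = 0.
Proof. by move=> u0; rewrite /clamp max_r// min_l. Qed.
Lemma clamp1 u : 1 <= u -> clamp u = 1.
Proof. by move=> u1; rewrite /clamp max_l ?(le_trans ler01)// min_r. Qed.
Lemma clamp_mono u v : u <= v -> clamp u <= clamp v.
Proof.
move=> uv; rewrite /clamp; apply: le_min2 => //; exact: le_max2.
Qed.
Lemma clamp_cont : continuous clamp.
Proof.
move=> x; apply: (@continuous_min R R (fun u : R => Num.max u 0) (cst 1) x); last exact: cvg_cst.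
apply: (@continuous_max R R id (cst 0) x); last exact: cvg_cst. exact: cvg_id.
Qed.

Lemma a_ge k : (k <= a k)%N.
Proof.
elim: k => // k IH; apply: leq_ltn_trans IH _; exact: ha.
Qed.
Lemma a_mono m n : (m <= n)%N -> (a m <= a n)%N.
Proof.
rewrite leq_eqVlt => /orP[/eqP->//|/ha/ltnW//].
Qed.

Lemma SS_stable N N' t : t <= N%:R -> (N <= N')%N -> SS N' t = SS N t.
Proof.
move=> tN; elim: N' => [|N' IH]; first by rewrite leqn0 => /eqP->.
rewrite leq_eqVlt => /orP[/eqP<-//|]; rewrite ltnS => NN'.
rewrite /SS big_ord_recr /= -/(SS N' t) IH // clamp0 ?addr0//.
rewrite subr_le0 (le_trans tN)// ler_nat (leq_trans NN') //; exact: a_ge.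
Qed.

Lemma psiE N t : t <= N%:R -> psi t = (1 - expR (- t)) + SS N t.
Proof.
move=> tN; rewrite /psi; congr (_ + _).
have tT : t <= (Num.truncn t).+1%:R by rewrite ltW// truncnS_gt.
set T := (Num.truncn t).+1.
by rewrite -(SS_stable _ (maxn T N) _ tT (leq_maxl T N)) -(SS_stable _ (maxn T N) _ tN (leq_maxr T N)).
Qed.

Lemma SS_ge0 N t : 0 <= SS N t.
Proof. by apply: sumr_ge0 => k _; exact: clamp_ge0. Qed.

Lemma SS_monoN K N t : (K <= N)%N -> SS K t <= SS N t.
Proof.
elim: N => [|N IH]; first by rewrite leqn0 => /eqP->.
rewrite leq_eqVlt => /orP[/eqP->//|]; rewrite ltnS => KN.
rewrite /SS big_ord_recr /= -/(SS N t) -/(SS K t) -[SS K t]addr0 lerD ?IH//; exact: clamp_ge0.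
Qed.

Lemma SS_monot N s t : s <= t -> SS N s <= SS N t.
Proof.
by move=> st; apply: ler_sum => k _; apply: clamp_mono; rewrite lerB.
Qed.

Lemma SS_leN N t : SS N t <= N%:R.
Proof.
rewrite /SS; apply: le_trans; first by apply: ler_sum => k _; exact: clamp_le1.
by rewrite sumr_const card_ord.
Qed.

Lemma psi_lt s t : s < t -> psi s < psi t.
Proof.
move=> st; pose N := (Num.truncn t).+1.
have tN : t <= N%:R by rewrite ltW// truncnS_gt.
rewrite (psiE _ _ (le_trans (ltW st) tN)) (psiE _ _ tN).
apply: ltr_leD; last exact/SS_monot/ltW.
by rewrite ltrD2l ltrN2 ltr_expR ltrN2.
Qed.

Lemma psi_ge0 t : 0 <= t -> 0 <= psi t.
Proof.
move=> t0; rewrite /psi addr_ge0 ?SS_ge0// subr_ge0 expR_le1 oppr_le0//.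
Qed.

Lemma SS_cont N : continuous (SS N).
Proof.
elim: N => [|N IH] t.
  rewrite /SS; under eq_fun do rewrite big_ord0. exact: cvg_cst.
rewrite /SS; under eq_fun do rewrite big_ord_recr /=.
apply: cvgD; first exact: IH.
apply: (@cvg_comp _ _ _ (fun u => u - (a N)%:R) clamp _ _ _ _ (clamp_cont _)).
by apply: cvgB; [exact: cvg_id|exact: cvg_cst].
Qed.

Lemma e_cont : continuous (fun t : R => 1 - expR (- t)).
Proof.
move=> t; apply: cvgB; first exact: cvg_cst.
apply: (@continuous_comp _ _ _ (fun u : R => - u) expR t); last exact: continuous_expR.
exact: (cvgN cvg_id).
Qed.

Lemma psi_cont : continuous psi.
Proof.
move=> t0; pose N := (Num.truncn t0).+2.
have Hb : \forall t \near t0, t < t0 + 1.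
  apply/nbhs_ballP; exists 1 => //= t; rewrite /ball /= ltr_norml => /andP[h1 h2].
  lra.
have H : \forall t \near t0, (1 - expR (- t)) + SS N t = psi t.
  near=> t; rewrite (psiE N t) //.
  have tt : t < t0 + 1 by near: t.
  apply: ltW; apply: (lt_trans tt).
  have := truncnS_gt t0; rewrite /N -addn1 natrD; lra.
have := near_eq_cvg H.
move=> HH; apply: cvg_trans (HH _) _.
rewrite -(nbhs_singleton H); apply: cvgD; [exact: e_cont|exact: SS_cont].
Unshelve. all: by end_near.
Qed.



Lemma SS_full K t : (a K)%:R + 1 <= t -> SS K t = K%:R.
Proof.
move=> tK; rewrite /SS (eq_bigr (fun=> 1)) ?sumr_const ?card_ord// => k _.
apply: clamp1; rewrite lerBrDr addrC (le_trans _ tK)// lerD2r ler_nat a_mono//.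
exact: ltnW.
Qed.

Lemma psi_infty : psi t @[t --> +oo] --> +oo.
Proof.
apply/cvgryPge => A.
pose K := (Num.truncn A).+1.
near=> t.
have tK : (a K)%:R + 1 <= t by near: t; apply: nbhs_pinfty_ge; rewrite num_real.
have t0 : 0 <= t by apply: le_trans tK; rewrite addr_ge0.
have AK : A <= K%:R by rewrite ltW// truncnS_gt.
pose N := (Num.truncn t).+1.
have KN : (K <= N)%N.
  rewrite -(ler_nat R); apply: ltW; apply: (le_lt_trans _ (truncnS_gt t)).
  apply: le_trans tK; apply: (le_trans (y := (a K)%:R)); first by rewrite ler_nat a_ge.
  by rewrite lerDl.
apply: (le_trans AK); rewrite -(SS_full _ _ tK) (le_trans (SS_monoN _ _ t KN))//.
rewrite /psi lerDr subr_ge0 expR_le1 oppr_le0//.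
Unshelve. all: by end_near.
Qed.

End Psi.
Section Meas.
Variable R : realType.

Definition box (q : rat * rat * nat) : set (R * R) :=
  let e := ((q.2).+1%:R)^-1 : R in
  `](ratr q.1.1 - e), (ratr q.1.1 + e)[ `*` `](ratr q.1.2 - e), (ratr q.1.2 + e)[.

Lemma open_meas2 (O : set (R * R)) : open O -> measurable O.
Proof.
move=> oO.
pose F q := if pselect (box q `<=` O) then box q else set0.
have -> : O = \bigcup_q F q.
  apply/seteqP; split; last first.
    move=> x [q _]; rewrite /F; case: pselect => // H; exact: H.
  move=> x Ox; have := oO x Ox; move=> /nbhs_ballP [e /= e0 He].
  pose n := Num.truncn (2 / e).
  pose d : R := (n.+1%:R)^-1.
  have d0 : 0 < d by rewrite invr_gt0 ltr0n.
  have de : d < e / 2.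
    have h : 2 / e < n.+1%:R by exact: truncnS_gt.
    rewrite ltr_pdivrMr // in h.
    rewrite /d -div1r ltr_pdivrMr ?ltr0n// mulrAC (mulrC e). lra.
  have [q1 q1P] : exists q1 : rat, ratr q1 \in `](x.1 - d), (x.1 + d)[ by apply: rat_in_itvoo; lra.
  have [q2 q2P] : exists q2 : rat, ratr q2 \in `](x.2 - d), (x.2 + d)[ by apply: rat_in_itvoo; lra.
  move: q1P q2P; rewrite !in_itv /= => /andP[h1 h2] /andP[h3 h4].
  have sub : box (q1, q2, n) `<=` O.
    move=> z; rewrite /box /= -/d; case; rewrite !in_itv /= => /andP[h5 h6] /andP[h7 h8].
    apply: He; split; rewrite /ball /= ltr_norml; apply/andP; split; lra.
  exists (q1, q2, n) => //; rewrite /F; destruct (pselect (box (q1, q2, n) `<=` O)) as [bO|nn]; last by case: (nn sub).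
  rewrite /box /= -/d; split; rewrite /= in_itv /=; apply/andP; split; lra.
apply: countable_bigcupT_measurable; first exact: countableP.
move=> q; rewrite /F; destruct (pselect (box q `<=` O)) as [bO|nn]; [exact: measurableX (measurable_itv _) (measurable_itv _)|exact: measurable0].
Qed.
End Meas.
Lemma leb_itv_fin (R : realType) (a b : R) : (lebesgue_measure `[a, b] < +oo)%E.
Proof.
rewrite lebesgue_measure_itv /=; case: ifP => _; last exact: ltry.
by rewrite -EFinB ltry.
Qed.

Lemma leb2_fin (R : realType) (O : set (R * R)) (M : R) :
  measurable O -> (forall x, O x -> `|x.1| <= M /\ `|x.2| <= M) -> (leb2 R O < +oo)%E.
Proof.
move=> mO hO.
have sub : O `<=` `[-M, M] `*` `[-M, M].
  move=> x /hO [h1 h2]; split; rewrite /= in_itv /= -ler_norml //.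
have mQ : measurable (`[-M, M] `*` `[-M, M] : set (R * R)).
  exact: measurableX (measurable_itv _) (measurable_itv _).
apply: (le_lt_trans (@le_measure _ _ _ (leb2 R) O _ _ _ sub)); rewrite ?inE //.
rewrite /leb2 /=. rewrite product_measure1E; try exact: measurable_itv.
apply: lte_mul_pinfty; [exact: measure_ge0| |exact: leb_itv_fin].
by rewrite ge0_fin_numE ?leb_itv_fin.
Qed.

Lemma le_sum_nat (R : realType) (F : nat -> R) m l :
  (forall j, 0 <= F j) -> (l <= m)%N -> F l <= \sum_(j < m.+1) F j.
Proof.
move=> F0; elim: m => [|m IH].
  by rewrite leqn0 => /eqP->; rewrite big_ord1.
rewrite leq_eqVlt => /orP[/eqP->|]; rewrite big_ord_recr /=.
  by rewrite lerDr sumr_ge0.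
by rewrite ltnS => /IH h; apply: (le_trans h); rewrite lerDl.
Qed.

Theorem lemma4p2 (R : realType) (Omega : set (R * R)) (y : nat -> R * R -> R) :
  open Omega ->
  (exists M : R, forall x, Omega x -> `|x.1| <= M /\ `|x.2| <= M) ->
  (forall l, measurable_fun Omega (y l)) ->
  (forall l, (leb2 R).-integrable Omega (fun x => (y l x)%:E)) ->
  (leb2 R).-negligible
    (Omega `\` \bigcup_n \bigcap_(l in [set l | (n <= l)%N])
        [set x | `|y n x - y l x| <= 1]) ->
  exists (phi : nat -> nat) (psi : R -> R),
    (forall m n, (m < n)%N -> (phi m < phi n)%N) /\
    (forall s t, 0 <= s -> s < t -> psi s < psi t) /\
    {within `[0, +oo[, continuous psi} /\
    (forall t, 0 <= t -> 0 <= psi t) /\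
    psi t @[t --> +oo] --> +oo /\
    exists C : R, 0 < C /\
      forall l, (\int[leb2 R]_(x in Omega) (psi `|y (phi l) x|)%:E <= C%:E)%E.
Proof.
move=> oO [M hM] my _ neg.
have mO := @open_meas2 R Omega oO.
have fin := @leb2_fin R Omega M mO hM.
pose mu := leb2 R.
pose B (n : nat) := \bigcup_l (Omega `&` ((fun x => `|y l x|) @^-1` `]n%:R, +oo[)).
have mBl n l : measurable (Omega `&` ((fun x => `|y l x|) @^-1` `]n%:R, +oo[)).
  apply: (measurableT_comp (@measurable_realfun.normr_measurable _ setT) (my l)) => //; exact: measurable_itv.
have mB n : measurable (B n) by apply: bigcupT_measurable => l; exact: mBl.
have BO n : B n `<=` Omega by move=> x [l _ []].
have Bdec : nonincreasing_seq B.
  apply/nonincreasing_seqP => n; rewrite subsetEset => x [l _ [Ox]].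
  rewrite /= !in_itv /= !andbT => h; exists l => //; split => //=.
  rewrite in_itv /= andbT; apply: le_lt_trans h; rewrite ler_nat //.
have mcap : measurable (\bigcap_n B n) by exact: bigcapT_measurable.
have cap0 : mu (\bigcap_n B n) = 0%E.
  case: neg => N [mN muN sub].
  apply/eqP; rewrite eq_le measure_ge0 andbT -muN.
  apply: le_measure; [by rewrite inE|by rewrite inE|].
  move=> x capx; apply: sub; split; first exact: (BO 0%N x (capx 0%N I)).
  move=> [n _ good].
  pose K := \sum_(j < n.+1) `|y j x| + 1.
  have hK l : `|y l x| <= K.
    have [ln|nl] := leqP l n.
      rewrite /K (le_trans (le_sum_nat R (fun j => `|y j x|) n l (fun j => normr_ge0 _) ln))//.
      by rewrite lerDl.
    have := good l (ltnW nl); rewrite /= => h.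
    have e : y l x = y n x - (y n x - y l x) by rewrite opprB addrC subrK.
    rewrite e; apply: (le_trans (ler_normB _ _)); rewrite /K lerD//.
    exact: (le_sum_nat R (fun j => `|y j x|) n n (fun j => normr_ge0 _) (leqnn n)).
  have [l _ [_ h]] := capx (Num.truncn K).+1 I.
  move: h; rewrite /= in_itv /= andbT => h.
  by have := lt_le_trans (lt_trans (truncnS_gt K) h) (hK l); rewrite ltxx.
have cvgB : (mu \o B) @ \oo --> 0%E.
  rewrite -cap0; apply: nonincreasing_cvg_mu => //.
  apply: le_lt_trans fin; apply: le_measure; rewrite ?inE //; exact: mB.
have hfin n : mu (B n) \is a fin_num.
  rewrite ge0_fin_numE ?measure_ge0 //; apply: le_lt_trans fin.
  apply: le_measure; rewrite ?inE //; try exact: mB; try exact: BO.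
have [_ fc] := (fine_cvgP (mu \o B) 0%R).1 cvgB.
pose w (k : nat) : R := 1 / (2 ^ k.+1)%:R.
have w0 k : 0 < w k by rewrite /w divr_gt0 // ltr0n expn_gt0.
have hN k : exists N, forall n, (N <= n)%N -> (mu (B n) <= (w k)%:E)%E.
  have HH := cvgr_le _ fc _ (w0 k); case: HH => N _ HN.
  exists N => n Nn; rewrite -(fineK (hfin n)) lee_fin; exact: HN.
have [Nf HNf] := choice hN.
pose a : nat -> nat := fix a k := if k is k'.+1 then maxn (a k').+1 (Nf k) else Nf 0%N.
have h1 k : (a k < a k.+1)%N by rewrite /= leq_maxl.
have ha : forall m n, (m < n)%N -> (a m < a n)%N.
  move=> m n; elim: n => // n IH; rewrite ltnS leq_eqVlt => /orP[/eqP->|/IH h].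
    exact: h1.
  exact: ltn_trans h (h1 n).
have haN k : (Nf k <= a k)%N by case: k => [|k] //=; rewrite leq_maxr.
have muBa k : (mu (B (a k)) <= (w k)%:E)%E := HNf k (a k) (haN k).
have mOfin : mu Omega \is a fin_num by rewrite ge0_fin_numE ?measure_ge0.
exists id, (psi R a).
split => //. split; first by move=> s t _; exact: psi_lt R a ha s t.
split; first exact: continuous_subspaceT (psi_cont R a ha).
split; first exact: psi_ge0 R a.
split; first exact: psi_infty R a ha.
exists (fine (mu Omega) + 2); split.
  have := fine_ge0 (measure_ge0 mu Omega); lra.
move=> l; rewrite /=.
pose g k x : \bar R := (\1_(B (a k)) x)%:E.
have mg k : measurable_fun Omega (EFin \o (\1_(B (a k)) : R * R -> R)).
  by apply/measurable_EFinP; exact: measurable_indic.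
have g0 k x : Omega x -> (0 <= g k x)%E by move=> _; rewrite lee_fin indicE ler0n.
have mf : measurable_fun Omega (EFin \o (fun x => psi R a `|y l x|)).
  apply/measurable_EFinP.
  apply: (measurableT_comp (continuous_measurable_fun (psi_cont R a ha))).
  exact: (measurableT_comp (@measurable_realfun.normr_measurable _ setT) (my l)).
have mS : measurable_fun Omega ((fun x => (\sum_(k <oo) g k x)%E) : R * R -> \bar R).
  exact: (@ge0_emeasurable_sum _ _ _ Omega g xpredT (fun k x Ox _ => g0 k x Ox) (fun k _ => mg k)).
have ptw x : Omega x -> ((psi R a `|y l x|)%:E <= 1%:E + \sum_(k <oo) g k x)%E.
  move=> Ox; set t := `|y l x|.
  rewrite (psiE R a ha (Num.truncn t).+1 t (ltW (truncnS_gt t))) EFinD.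
  apply: leeD; first by rewrite lee_fin; have := expR_ge0 (- t); lra.
  apply: le_trans; last exact: (nneseries_lim_ge (Num.truncn t).+1 (fun i _ _ => g0 i x Ox)).
  rewrite big_mkord /SS -sumEFin; apply: lee_sum => k _; rewrite lee_fin indicE.
  case: (boolP (x \in B (a k))) => xin; first exact: clamp_le1.
  have tk : t <= (a k)%:R.
    rewrite leNgt; apply/negP => h; move/negP: xin; apply; rewrite inE.
    exists l => //; split => //=; rewrite in_itv /= andbT; exact: h.
  by rewrite clamp0 // subr_le0.
have f0 x : Omega x -> (0 <= (psi R a `|y l x|)%:E)%E.
  by move=> _; rewrite lee_fin psi_ge0.
have mS1 : measurable_fun Omega ((fun x => (1%:E + \sum_(k <oo) g k x)%E) : R * R -> \bar R).
  by apply: emeasurable_funD => //; exact: measurable_cst.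
apply: (le_trans (ge0_le_integral (leb2 R) mO f0 mf mS1 ptw)).
rewrite (ge0_integralD (leb2 R) mO); last 4 first.
- by move=> x _; rewrite lee_fin.
- exact: measurable_cst.
- by move=> x Ox; apply: nneseries_ge0 => k _ _; exact: g0.
- exact: mS.
have -> : (\int[leb2 R]_(x in Omega) 1%:E = 1 * mu Omega)%E by exact: (integral_cst (leb2 R) mO 1%E).
rewrite (integral_nneseries (leb2 R) mO mg g0).
have Sle : (\sum_(k <oo) \int[leb2 R]_(x in Omega) g k x <= 1%:E)%E.
  apply: le_trans (epsilon_trick0 xpredT ler01).
  apply: lee_nneseries.
    by move=> k _ _; apply: integral_ge0 => x Ox; exact: g0.
  move=> k _; rewrite /g integral_indic //.
  have h := muBa k; rewrite /mu /w in h; apply: (le_trans _ h).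
  by apply: le_measure; rewrite ?inE //; [exact: measurableI (mB _) mO|exact: mB].
  exact: mB.
rewrite mul1e -(fineK mOfin) (le_trans (leeD2l _ Sle)) // -EFinD lee_fin; lra.
Qed.
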